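(* Let $d\ge2$. For all $d$-dimensional copulas $C_1,C_2$, $$D_1(C_1,C_2)\le D_\infty(C_1,C_2)\le 2\,TV(C_1,C_2).$$ In particular, convergence with respect to $TV$ implies convergence with respect to $D_1$ and with respect to $D_\infty$.
   Context: $\mathbb{I}=[0,1]$, $\lambda^k$ is $k$-dimensional Lebesgue measure ($\lambda=\lambda^1$). For a $d$-dimensional copula $C$, $\mu_C$ is its associated probability measure on $\mathbb{I}^d$ and $K_C:\mathbb{I}\times\mathcal{B}(\mathbb{I}^{d-1})\to\mathbb{I}$ is (a version of) its Markov kernel, i.e. the regular conditional distribution of $(U_1,\dots,U_{d-1})$ given $U_d=v$ for $(U_1,\dots,U_d)\sim C$. Define $D_1(C_1,C_2)=\int_{\mathbb{I}^{d-1}}\int_{\mathbb{I}}|K_{C_1}(v,[\mathbf{0},\mathbf{u}])-K_{C_2}(v,[\mathbf{0},\mathbf{u}])|\,d\lambda(v)\,d\lambda^{d-1}(\mathbf{u})$, $D_\infty(C_1,C_2)=\sup_{\mathbf{u}\in\mathbb{I}^{d-1}}\int_{\mathbb{I}}|K_{C_1}(v,[\mathbf{0},\mathbf{u}])-K_{C_2}(v,[\mathbf{0},\mathbf{u}])|\,d\lambda(v)$, $TV(C_1,C_2)=\sup_{G\in\mathcal{B}(\mathbb{I}^d)}|\mu_{C_1}(G)-\mu_{C_2}(G)|$. *)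

(* Defs.v *)
From HB Require Import structures.
From mathcomp Require Import all_boot all_order all_algebra.
From mathcomp Require Import all_classical all_reals all_analysis.
Set Implicit Arguments.
Unset Strict Implicit.
Unset Printing Implicit Defensive.
Import Order.TTheory GRing.Theory Num.Theory.
Import numFieldNormedType.Exports.
Local Open Scope classical_set_scope.
Local Open Scope ring_scope.

Section copula_defs.
Variable R : realType.

Definition unit_cube (d : nat) : set (d.-tuple R) :=
  [set x | forall i, 0 <= tnth x i <= 1].

Definition box0 (d : nat) (u : d.-tuple R) : set (d.-tuple R) :=
  [set x | forall i, 0 <= tnth x i <= tnth u i].

(* d-dimensional copula (as a function on I^d): grounded, uniform margins,
   d-increasing *)
Definition is_copula (d : nat) (C : d.-tuple R -> R) : Prop :=
  [/\ (forall u, unit_cube u -> (exists i, tnth u i = 0) -> C u = 0),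
      (forall u i, unit_cube u -> (forall j, j != i -> tnth u j = 1) ->
          C u = tnth u i) &
      (forall a b, unit_cube a -> unit_cube b -> (forall i, tnth a i <= tnth b i) ->
          0 <= \sum_(S : {set 'I_d})
                 (-1) ^+ #|S| *
                 C [tuple (if i \in S then tnth a i else tnth b i) | i < d])].

Definition copula_measure (d : nat) (C : d.-tuple R -> R)
    (mu : probability (d.-tuple R) R) : Prop :=
  mu (@unit_cube d) = 1%E /\ forall u, unit_cube u -> mu (box0 u) = (C u)%:E.

Definition firsts (n : nat) (x : n.+1.-tuple R) : n.-tuple R :=
  [tuple tnth x (widen_ord (leqnSn n) i) | i < n].
Definition lastc (n : nat) (x : n.+1.-tuple R) : R := tnth x ord_max.

(* K is (a version of) the Markov kernel of mu: the regular conditional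
   distribution of (U_1,...,U_n) given U_(n+1) = v, where (U_1..U_(n+1)) ~ mu
   and U_(n+1) is uniform on [0,1] *)
Definition markov_kernel_of (n : nat) (mu : probability (n.+1.-tuple R) R)
    (K : R.-pker R ~> n.-tuple R) : Prop :=
  forall (A : set R) (B : set (n.-tuple R)), measurable A -> measurable B ->
    (\int[lebesgue_measure]_(v in A `&` `[0%R, 1%R]) K v B)%E =
    mu [set x | B (firsts x) /\ A (lastc x)].

(* integral over I^n with respect to lambda^n, written as an iterated integral *)
Fixpoint int_cube (n : nat) : (n.-tuple R -> \bar R) -> \bar R :=
  match n return (n.-tuple R -> \bar R) -> \bar R with
  | 0 => fun f => f [tuple]
  | m.+1 => fun f =>
      (\int[lebesgue_measure]_(x in `[0%R, 1%R]) int_cube (fun t => f (cons_tuple x t)))%E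
  end.

Definition kdist (n : nat) (K1 K2 : R.-pker R ~> n.-tuple R) (u : n.-tuple R)
  : \bar R :=
  (\int[lebesgue_measure]_(v in `[0%R, 1%R]) `|K1 v (box0 u) - K2 v (box0 u)|)%E.

Definition D1 (n : nat) (K1 K2 : R.-pker R ~> n.-tuple R) : \bar R :=
  int_cube (kdist K1 K2).

Definition Dinf (n : nat) (K1 K2 : R.-pker R ~> n.-tuple R) : \bar R :=
  ereal_sup [set kdist K1 K2 u | u in @unit_cube n].

Definition TV (d : nat) (mu1 mu2 : probability (d.-tuple R) R) : \bar R :=
  ereal_sup [set `|mu1 G - mu2 G|%E | G in [set G | measurable G]].

End copula_defs.

(* Main.v *)
Require Import Defs.
From HB Require Import structures.
From mathcomp Require Import all_boot all_order all_algebra.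
From mathcomp Require Import all_classical all_reals all_analysis.
From mathcomp Require Import measurable_realfun.
Import Order.TTheory GRing.Theory Num.Theory.
Import numFieldNormedType.Exports.
Local Open Scope classical_set_scope.
Local Open Scope ring_scope.

Lemma measR (R : realType) (A : set R) : measurable A -> @measurable _ (measurableTypeR R) A.
Proof. exact. Qed.
Lemma measR' (R : realType) (A : set R) : @measurable _ (measurableTypeR R) A -> measurable A.
Proof. exact. Qed.

Section helpers.
Variable R : realType.
Local Open Scope ereal_scope.

Lemma le_int_nm d (T : measurableType d) (mu : {measure set T -> \bar R})
  (D : set T) (f g : T -> \bar R) :
  (forall x, D x -> 0 <= f x) -> (forall x, D x -> f x <= g x) ->
  \int[mu]_(x in D) f x <= \int[mu]_(x in D) g x.
Proof.
move=> f0 fg.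
have g0 : forall x, D x -> 0 <= g x by move=> x Dx; exact: le_trans (f0 _ Dx) (fg _ Dx).
rewrite (ge0_integralE _ f0) (ge0_integralE _ g0).
apply: ereal_sup_le => _ [h /= hf <-]; exists h => //= x.
apply: (le_trans (hf x)); rewrite /patch; case: ifP => // /[!inE] Dx; exact: fg.
Qed.

Lemma int_cube_le (n : nat) (f : n.-tuple R -> \bar R) (c : \bar R) :
  0 <= c -> (forall u, unit_cube u -> 0 <= f u <= c) -> 0 <= int_cube f <= c.
Proof.
elim: n f => [|n IH] f c0 hf /=.
  apply: hf => i; case: i => //.
have hin : forall x, [set` `[0%R, 1%R]] x -> 0 <= int_cube (fun t => f (cons_tuple x t)) <= c.
  move=> x; rewrite /= in_itv /= => /andP[x0 x1]; apply: IH => // t tc; apply: hf => i.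
  case: (unliftP ord0 i) => [j ->|->].
    by rewrite tnthS; exact: tc.
  by rewrite tnth0 x0 x1.
apply/andP; split.
  by apply: integral_ge0 => x /hin /andP[].
apply: (le_trans (@le_int_nm _ _ _ _ _ (cst c) _ _)).
- by move=> x /hin /andP[].
- by move=> x /hin /andP[].
rewrite integral_cst //= lebesgue_measure_itv /= lte_fin ltr01 sube0 mule1 //.
Qed.

Lemma box0_meas n (u : n.-tuple R) : measurable (box0 u).
Proof.
have -> : box0 u = \bigcap_(i in [set: 'I_n]) ((@tnth n R)^~ i @^-1` `[0%R, tnth u i]).
  apply/seteqP; split => x /=.
    by move=> h i _; rewrite /= in_itv /=; exact: h.
  by move=> h i; have := h i I; rewrite /= in_itv.
apply: fin_bigcap_measurable; first exact: finite_finset.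
move=> i _; rewrite -[X in measurable X]setTI.
exact: (measurable_tnth i) measurableT _ (measurable_itv _).
Qed.

Lemma firsts_meas n : measurable_fun [set: n.+1.-tuple R] (@firsts R n).
Proof.
apply/measurable_fun_tnthP => i.
rewrite (_ : _ \o _ = (@tnth _ R)^~ (widen_ord (leqnSn n) i)).
  exact: measurable_tnth.
by apply/funext => x /=; rewrite tnth_mktuple.
Qed.

Lemma G_meas n (A : set R) (B : set (n.-tuple R)) : measurable A -> measurable B ->
  measurable [set x : n.+1.-tuple R | B (firsts x) /\ A (lastc x)].
Proof.
move=> mA mB.
have -> : [set x : n.+1.-tuple R | B (firsts x) /\ A (lastc x)] =
  (@firsts R n @^-1` B) `&` ((@lastc R n) @^-1` A) by [].
apply: measurableI.
  by rewrite -[X in measurable X]setTI; exact: firsts_meas.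
rewrite -[X in measurable X]setTI; exact: (measurable_tnth ord_max).
Qed.

Lemma kdist_le n (mu1 mu2 : probability (n.+1.-tuple R) R)
  (K1 K2 : R.-pker R ~> n.-tuple R) (u : n.-tuple R) :
  markov_kernel_of mu1 K1 -> markov_kernel_of mu2 K2 ->
  kdist K1 K2 u <= 2%:E * TV mu1 mu2.
Proof.
move=> hK1 hK2.
set B := box0 u.
have mB : measurable B by exact: box0_meas.
have Kfin (K : R.-pker R ~> n.-tuple R) v : K v B \is a fin_num.
  rewrite ge0_fin_numE ?measure_ge0//.
  apply: (le_lt_trans (_ : _ <= K v [set: n.-tuple R])).
    by apply: le_measure; rewrite ?inE.
  by rewrite prob_kernel ltry.
pose g1 v := fine (K1 v B); pose g2 v := fine (K2 v B).
have K1E v : K1 v B = (g1 v)%:E by rewrite fineK.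
have K2E v : K2 v B = (g2 v)%:E by rewrite fineK.
have mg (K : R.-pker R ~> n.-tuple R) : measurable_fun [set: R] (fun v => fine (K v B)).
  apply/measurable_EFinP.
  rewrite (_ : _ \o _ = (fun v => K v B)); first exact: measurable_kernel.
  by apply/funext => v /=; rewrite fineK.
have mg1 := mg K1; have mg2 := mg K2.
pose P := [set v | g2 v <= g1 v]%R.
have mP : measurable P.
  have := @measurable_lee _ R R setT measurableT (EFin \o g2) (EFin \o g1).
  rewrite setTI; rewrite (_ : [set x | ((EFin \o g2) x <= (EFin \o g1) x)] = P).
    by apply; exact/measurable_EFinP.
  by apply/seteqP; split => v /=; rewrite lee_fin.

pose I : set R := [set` `[0%R, 1%R]].
have mI : measurable I by exact: measurable_itv.
have gb (K : R.-pker R ~> n.-tuple R) v : (0 <= fine (K v B) <= 1)%R.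
  rewrite -!lee_fin !fineK// measure_ge0 /=.
  apply: (le_trans (_ : _ <= K v [set: n.-tuple R])); first by apply: le_measure; rewrite ?inE.
  by rewrite prob_kernel.
have ibl (A : set R) (g : R -> R) : measurable A -> measurable_fun setT g ->
    (forall v, 0 <= g v <= 1)%R -> lebesgue_measure.-integrable (A `&` I) (EFin \o g).
  move=> mA mgf hg; apply: measurable_bounded_integrable.
  - exact: measurableI.
  - apply: (@le_lt_trans _ _ (lebesgue_measure I)).
      apply: le_measure; rewrite ?inE//; exact: measurableI.
    by rewrite lebesgue_measure_itv /= lte_fin ltr01 sube0 ltry.
  - exact: measurable_funS mgf.
  - exists 1%R; split => // M M1 x _ /=.
    have /andP[h0 h1] := hg x; rewrite ger0_norm//; exact: le_trans h1 (ltW M1).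
have term (A : set R) : measurable A ->
    \int[lebesgue_measure]_(v in A `&` I) ((g1 v)%:E - (g2 v)%:E) =
    mu1 [set x | B (firsts x) /\ A (lastc x)] - mu2 [set x | B (firsts x) /\ A (lastc x)].
  move=> mA; have mAI : @measurable _ (measurableTypeR R) (A `&` I) by apply: measurableI => //; exact: measR.
  rewrite (integralB_EFin mAI (ibl _ _ (@measR R A mA) mg1 (gb K1)) (ibl _ _ (@measR R A mA) mg2 (gb K2))).
  rewrite -hK1// -hK2//; congr (_ - _); apply: eq_integral => v _; by rewrite fineK.
have term2 (A : set R) : measurable A ->
    \int[lebesgue_measure]_(v in A `&` I) ((g2 v)%:E - (g1 v)%:E) =
    mu2 [set x | B (firsts x) /\ A (lastc x)] - mu1 [set x | B (firsts x) /\ A (lastc x)].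
  move=> mA; have mAI : @measurable _ (measurableTypeR R) (A `&` I) by apply: measurableI => //; exact: measR.
  rewrite (integralB_EFin mAI (ibl _ _ (@measR R A mA) mg2 (gb K2)) (ibl _ _ (@measR R A mA) mg1 (gb K1))).
  rewrite -hK1// -hK2//; congr (_ - _); apply: eq_integral => v _; by rewrite fineK.
have tvb G : measurable G -> `|mu1 G - mu2 G| <= TV mu1 mu2.
  by move=> mG; apply: ereal_sup_ubound; exists G.
have absC (a b : \bar R) : a \is a fin_num -> b \is a fin_num -> `|b - a| = `|a - b|.
  by move=> fa fb; rewrite -(fineK fa) -(fineK fb) -!EFinB !abse_EFin distrC.
have mAbs : measurable_fun setT (fun v => `|K1 v B - K2 v B|).
  apply: measurableT_comp => //; apply: emeasurable_funB; exact: measurable_kernel.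
have -> : kdist K1 K2 u =
   \int[lebesgue_measure]_(v in P `&` I) ((g1 v)%:E - (g2 v)%:E) +
   \int[lebesgue_measure]_(v in ~` P `&` I) ((g2 v)%:E - (g1 v)%:E).
  rewrite /kdist (_ : [set` `[0%R, 1%R]] = (P `&` I) `|` (~` P `&` I)); last first.
    by rewrite -setIUl setUv setTI.
  rewrite integral_setU //.
  - congr (_ + _); apply: eq_integral => v /[!inE] -[Pv _];
      rewrite K1E K2E -EFinB abse_EFin.
      by rewrite ger0_norm// subr_ge0.
    rewrite distrC ger0_norm// subr_ge0; apply: ltW; rewrite ltNge; exact/negP.
  - by apply: measurableI => //; exact: measR.
  - by apply: measurableI => //; apply: measurableC; exact: measR.
  - exact: measurable_funS mAbs.
  - by apply/disj_setPS => v [[Pv _] [nPv _]].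
rewrite term// term2; last exact: measurableC.
rewrite (_ : (2%:E : \bar R) = (2%:R)%:E)// mule_natl mule2n.
apply: leeD.
  apply: le_trans (lee_abs _) (tvb _ _); exact: G_meas.
apply: le_trans (lee_abs _) _; rewrite absC ?fin_num_measure//; try (apply: G_meas => //; exact: measurableC).
apply: tvb; apply: G_meas => //; exact: measurableC.
Qed.


Lemma bounds n (mu1 mu2 : probability (n.+1.-tuple R) R)
  (K1 K2 : R.-pker R ~> n.-tuple R) :
  markov_kernel_of mu1 K1 -> markov_kernel_of mu2 K2 ->
  [/\ 0 <= D1 K1 K2, D1 K1 K2 <= Dinf K1 K2 & Dinf K1 K2 <= 2%:E * TV mu1 mu2].
Proof.
move=> hK1 hK2.
have kd0 u : 0 <= kdist K1 K2 u by apply: integral_ge0 => v _; exact: abse_ge0.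
pose u0 : n.-tuple R := [tuple 0%R | i < n].
have u0c : unit_cube u0 by move=> i; rewrite tnth_mktuple lexx ler01.
have Dinf0 : 0 <= Dinf K1 K2.
  apply: le_trans (kd0 u0) _; apply: ereal_sup_ubound; by exists u0.
have /andP[h1 h2] : 0 <= D1 K1 K2 <= Dinf K1 K2.
  apply: int_cube_le => // u uc; rewrite kd0 /=.
  by apply: ereal_sup_ubound; exists u.
split => //.
by apply: ge_ereal_sup => _ [u _ <-]; exact: kdist_le.
Qed.
End helpers.

Theorem theorem2p3 (R : realType) (n : nat) (hn : (1 <= n)%N) :
  (forall (C1 C2 : n.+1.-tuple R -> R)
          (mu1 mu2 : probability (n.+1.-tuple R) R)
          (K1 K2 : R.-pker R ~> n.-tuple R),
      is_copula C1 -> is_copula C2 ->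
      copula_measure C1 mu1 -> copula_measure C2 mu2 ->
      markov_kernel_of mu1 K1 -> markov_kernel_of mu2 K2 ->
      (D1 K1 K2 <= Dinf K1 K2)%E /\ (Dinf K1 K2 <= 2%:E * TV mu1 mu2)%E) /\
  (forall (Cs : nat -> n.+1.-tuple R -> R) (C : n.+1.-tuple R -> R)
          (mus : nat -> probability (n.+1.-tuple R) R)
          (mu : probability (n.+1.-tuple R) R)
          (Ks : nat -> R.-pker R ~> n.-tuple R) (K : R.-pker R ~> n.-tuple R),
      (forall k, is_copula (Cs k)) -> is_copula C ->
      (forall k, copula_measure (Cs k) (mus k)) -> copula_measure C mu ->
      (forall k, markov_kernel_of (mus k) (Ks k)) -> markov_kernel_of mu K ->
      (fun k => TV (mus k) mu) @ \oo --> 0%E ->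
      (fun k => D1 (Ks k) K) @ \oo --> 0%E /\
      (fun k => Dinf (Ks k) K) @ \oo --> 0%E).
Proof.
split.
  move=> C1 C2 mu1 mu2 K1 K2 _ _ _ _ hK1 hK2.
  by have [] := @bounds R n _ _ _ _ hK1 hK2.
move=> Cs C mus mu Ks K _ _ _ _ hKs hK hTV.
have h2 : (fun k => 2%:E * TV (mus k) mu)%E @ \oo --> 0%E.
  by rewrite -(mule0 (2%:E : \bar R))%E; apply: cvgeZl.
have hDinf : (fun k => Dinf (Ks k) K) @ \oo --> 0%E.
  apply: (@squeeze_cvge _ _ _ _ (cst 0%E) _ (fun k => 2%:E * TV (mus k) mu)%E) => //.
    apply: nearW => k; have [h0 h1 h2'] := @bounds R n _ _ _ _ (hKs k) hK.
    by rewrite (le_trans h0 h1) h2'.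
  exact: cvg_cst.
split => //.
apply: (@squeeze_cvge _ _ _ _ (cst 0%E) _ (fun k => Dinf (Ks k) K)) => //.
  apply: nearW => k; have [h0 h1 h2'] := @bounds R n _ _ _ _ (hKs k) hK.
  by rewrite h0 h1.
exact: cvg_cst.
Qed.
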